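(* Let $n\ge 1$ be an integer and let $P\in\mathbb Z_{\ge0}[X]$ be a polynomial of degree $n$ with non-negative integer coefficients and $P(0)>0$. Define $h(j)=P(j)$ for $j\ge0$ and $h(j)=0$ for $j<0$. Then $\operatorname{hdepth}(h)\le 2^{n+1}$.
   Context: For a nonzero function $h:\mathbb Z\to\mathbb Z_{\ge 0}$ with $h(j)=0$ for all sufficiently negative $j$, and integers $k\le d$, set $\beta_k^d(h)=\sum_{j\le k}(-1)^{k-j}\binom{d-j}{k-j}h(j)$, and $\operatorname{hdepth}(h)=\max\{d\in\mathbb Z:\ \beta_k^d(h)\ge 0\text{ for all integers }k\le d\}$. *)

(* Defs.v *)
From mathcomp Require Import all_boot all_order all_algebra.
Set Implicit Arguments. Unset Strict Implicit. Unset Printing Implicit Defensive.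
Import Order.TTheory GRing.Theory Num.Theory.
Local Open Scope ring_scope.

(* beta_k^d(h) = sum_{j <= k} (-1)^(k-j) C(d-j, k-j) h(j), for a function
   h : int -> int vanishing below lo (h j = 0 for j < lo).  The terms with
   j < lo vanish, so the sum is the finite sum over lo <= j <= k
   (empty, i.e. 0, when k < lo).  For lo <= j <= k <= d the integers d-j, k-j
   are nonnegative, so the binomial is the nat binomial 'C(|d-j|, |k-j|). *)
Definition beta_from (lo : int) (h : int -> int) (k d : int) : int :=
  if k < lo then 0 else
  \sum_(i < (`|k - lo|%N).+1)
     let j := lo + (i%:Z) in
     (-1) ^+ (`|k - j|%N) * ('C(`|d - j|%N, `|k - j|%N))%:Z * h j.

Definition hdepth_adm (lo : int) (h : int -> int) (d : int) : Prop :=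
  forall k : int, k <= d -> 0 <= beta_from lo h k d.

Definition is_hdepth (lo : int) (h : int -> int) (D : int) : Prop :=
  hdepth_adm lo h D /\ forall d : int, hdepth_adm lo h d -> d <= D.

Definition hpoly (P : {poly int}) (j : int) : int :=
  if 0 <= j then P.[j] else 0.

(* Main.v *)
Require Import Defs.
From mathcomp Require Import all_boot all_order all_algebra.
From mathcomp Require Import zify ring lra.
Import Order.TTheory GRing.Theory Num.Theory.
Local Open Scope ring_scope.

Lemma beta1 (h : int -> int) (m : nat) :
  beta_from 0 h 1 m%:Z = h 1 - m%:Z * h 0.
Proof.
rewrite /beta_from /=.
rewrite big_ord_recr big_ord_recr big_ord0 /=.
rewrite !addn0 !add0r subnn bin0 bin1 expr0 expr1; ring.
Qed.

Lemma beta2 (h : int -> int) (m : nat) :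
  beta_from 0 h 2 m.+1%:Z = h 2 - m%:Z * h 1 + 'C(m.+1, 2)%:Z * h 0.
Proof.
rewrite /beta_from /=.
rewrite big_ord_recr big_ord_recr big_ord_recr big_ord0 /=.
rewrite !addn0 !add0r !add1n subnn subn1 /= bin0 bin1 expr0 expr1 sqrrN expr1n subn1 /=; ring.

Qed.
Lemma bin2x (m : nat) : (2 * 'C(m.+1, 2) = m.+1 * m)%N.
Proof.
elim: m => [|m IH]; first by [].
rewrite binS bin1 mulnDr IH; lia.
Qed.

Lemma horner2 (n : nat) (P : {poly int}) :
  size P = n.+1 -> (forall i : nat, 0 <= P`_i) ->
  P.[2] <= P.[0] + 2 ^+ n * (P.[1] - P.[0]).
Proof.
move=> hs hpos.
rewrite horner_coef0 !horner_coef hs !big_ord_recl !expr0 !mulr1.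
under [X in _ <= _ + _ * (_ + X - _)]eq_bigr do rewrite expr1n mulr1.

change (P`_ord0) with (P`_0).

have E : forall a b : int, a + b - a = b by move=> a b; ring.
rewrite E lerD2l mulr_sumr; apply: ler_sum => i _.

rewrite [X in _ <= X]mulrC; apply: ler_wpM2l => //.
rewrite /bump /= ler_eXn2l //; exact: ltn_ord.
Qed.

Lemma hpolyN (P : {poly int}) (k : nat) : hpoly P k%:Z = P.[k%:Z].
Proof. by []. Qed.

Lemma bound (n : nat) (P : {poly int}) (d : int) :
  (1 <= n)%N -> size P = n.+1 -> (forall i : nat, 0 <= P`_i) -> 0 < P.[0] ->
  hdepth_adm 0 (hpoly P) d -> d <= 2 ^+ n.+1.
Proof.
move=> hn hs hpos hP0 A.
have HN : 2 <= 2 ^+ n :> int by rewrite -[X in X <= _]expr1 ler_eXn2l.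
have H2 := @horner2 n P hs hpos.
rewrite exprS; move: (2 ^+ n) HN H2 => N HN H2.
rewrite leNgt; apply/negP => Hd.
case: d Hd A => [m|m] Hd A; last by move: Hd; lia.
case: m Hd A => [|m] Hd A; first by move: Hd; lia.
have B1 := A 1 ltac:(lia).
have B2 := A 2 ltac:(lia).
rewrite beta1 /hpoly /= in B1.
rewrite beta2 /hpoly /= in B2.
have Hc := bin2x m.
move: B1 B2 H2 hP0 Hc; move: P.[0] P.[1] P.[2] ('C(m.+1, 2)) => a p1 p2 c B1 B2 H2 ha Hc.
have Hc' : 2 * c%:Z = m.+1%:Z * m%:Z by lia.
have h1 : 0 <= (m%:Z - N) * (p1 - m.+1%:Z * a) by apply: mulr_ge0; lia.
have h2 : 0 <= a * (m%:Z - 2 * N) by apply: mulr_ge0; lia.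
have h3 : 0 <= m%:Z * (a * (m%:Z - 2 * N)) by apply: mulr_ge0; lia.
have h4 : 0 < a * (N - 1) by apply: mulr_gt0; lia.
nia.
Qed.

From Stdlib Require Import Classical.

Lemma max_exists (A : int -> Prop) (m B : int) :
  A m -> (forall d, A d -> d <= B) ->
  exists D, A D /\ forall d, A d -> d <= D.
Proof.
move=> Am HB.
have key : forall N : nat, forall m, A m -> B - m <= N%:Z ->
  exists D, A D /\ forall d, A d -> d <= D.
  elim=> [|N IH] m0 Am0 Hm0.
    exists m0; split => // d Ad; have := HB d Ad; have := HB m0 Am0; lia.
  case: (classic (exists d, A d /\ m0 < d)) => [[d [Ad Hd]]|Hno].
    by apply: (IH d Ad); lia.
  exists m0; split => // d Ad; rewrite leNgt; apply/negP => Hd; apply: Hno; by exists d.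
apply: (key `|B - m|%N m Am); lia.
Qed.

Theorem theorem3p1 (n : nat) (P : {poly int}) :
  (1 <= n)%N ->
  size P = n.+1 ->
  (forall i : nat, 0 <= P`_i) ->
  0 < P.[0] ->
  exists D : int, is_hdepth 0 (hpoly P) D /\ D <= 2 ^+ n.+1.
Proof.
move=> hn hs hpos hP0.
have Hneg : hdepth_adm 0 (hpoly P) (-1).
  move=> k hk; rewrite /beta_from; case: ifP => // /negbT; rewrite -leNgt; lia.
have [D [HD HDmax]] := @max_exists (hdepth_adm 0 (hpoly P)) (-1) (2 ^+ n.+1) Hneg (fun d Ad => @bound n P d hn hs hpos hP0 Ad).
exists D; split; first by split.
exact: (@bound n P D hn hs hpos hP0 HD).
Qed.
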